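(* There exists a deterministic algorithm that finds the sink of any $n$-dimensional Matoušek-type USO using at most $n$ vertex evaluations.
   Context: All vectors and matrices are over $GF(2)$; $\oplus$ denotes xor. An orientation of the hypercube $\{0,1\}^n$ is given by an outmap $o:\{0,1\}^n\to\{0,1\}^n$, the edge $\{v,v\oplus e_i\}$ being directed away from $v$ iff $o(v)_i=1$. An $n$-dimensional Matoušek-type USO is an orientation $o(v)=M(v\oplus s)$ with $M=PAP^T$ for a permutation matrix $P$ and an invertible upper-triangular $A\in\{0,1\}^{n\times n}$, and $s\in\{0,1\}^n$, the unique sink ($o(s)=0$). A sink-finding algorithm queries vertices $v$ and receives $o(v)$; it succeeds when it can output $s$. *)

(* Defs.v *)
(* Vertices of {0,1}^n are column vectors over 'F_2;
   xor is + in 'F_2. *)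
From mathcomp Require Import all_boot all_order all_algebra all_fingroup.
Set Implicit Arguments. Unset Strict Implicit. Unset Printing Implicit Defensive.
Import GRing.Theory.
Local Open Scope ring_scope.

Definition vertex (n : nat) := 'cV['F_2]_n.

Definition upper_triangular (n : nat) (A : 'M['F_2]_n) : Prop :=
  forall i j : 'I_n, (j < i)%N -> A i j = 0.

Definition matousek_outmap (n : nat) (sigma : 'S_n) (A : 'M['F_2]_n)
    (s : vertex n) : vertex n -> vertex n :=
  fun v => (perm_mx sigma *m A *m (perm_mx sigma)^T) *m (v + s).

Definition is_matousek_uso (n : nat) (o : vertex n -> vertex n) (s : vertex n)
  : Prop :=
  exists (sigma : 'S_n) (A : 'M['F_2]_n),
    upper_triangular A /\ A \in unitmx /\ o = matousek_outmap sigma A s.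

(* A deterministic adaptive sink-finding algorithm for dimension n:
   given the history of (queried vertex, answer) pairs, it chooses the next
   query; given the final history it outputs a vertex. *)
Record algorithm (n : nat) := Algorithm {
  next_query : seq (vertex n * vertex n) -> vertex n;
  output : seq (vertex n * vertex n) -> vertex n }.

Fixpoint history (n : nat) (alg : algorithm n) (o : vertex n -> vertex n)
    (k : nat) : seq (vertex n * vertex n) :=
  match k with
  | 0 => [::]
  | k'.+1 => let h := history alg o k' in
             let q := next_query alg h in rcons h (q, o q)
  end.

(* alg finds the sink of o using at most k vertex evaluations (making
   exactly k queries is no loss, since extra queries can be ignored). *)
Definition finds_sink_within (n : nat) (alg : algorithm n)
    (o : vertex n -> vertex n) (s : vertex n) (k : nat) : Prop :=
  output alg (history alg o k) = s.

(* Main.v *)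
Require Import Defs.
From mathcomp Require Import all_boot all_order all_algebra all_fingroup.
From mathcomp Require Import zify.
Import GRing.Theory.
Local Open Scope ring_scope.

Lemma F2opp (x : 'F_2) : - x = x. apply/val_inj. by case: x => [[|[|]]]. Qed.
Lemma F2one (x : 'F_2) : x != 0 -> x = 1.
Proof. move=> h; apply/val_inj; move: h. by case: x => [[|[|]]]. Qed.
Lemma F2add : 1 + 1 = 0 :> 'F_2. by apply/val_inj. Qed.

Definition step {n} (h : seq (vertex n * vertex n)) : vertex n :=
  if h is [::] then 0 else let p := last (0, 0) h in p.1 + p.2.

Definition alg n : algorithm n := Algorithm (@step n) (@step n).

Lemma step_rcons n (h : seq (vertex n * vertex n)) x : step (rcons h x) = x.1 + x.2.
Proof. by case: h => [|y h] //=; rewrite last_rcons. Qed.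

Lemma hist n (o : vertex n -> vertex n) k :
  step (history (alg n) o k) = iter k (fun v => v + o v) 0.
Proof. elim: k => [|k IH] //=. by rewrite step_rcons /= IH. Qed.

Lemma nil_iter n (B : 'M['F_2]_n) :
  (forall i j : 'I_n, (j <= i)%N -> B i j = 0) ->
  forall k (w : 'cV['F_2]_n) (i : 'I_n), (n - k <= i)%N ->
    (iter k (mulmx B) w) i 0 = 0.
Proof.
move=> HB; elim=> [|k IH] w i hi /=.
  by have := ltn_ord i; move: hi; rewrite /= subn0; lia.
rewrite mxE big1 // => j _.
case: (leqP j i) => h; first by rewrite HB // mul0r.
rewrite IH ?mulr0 //.
have := ltn_ord i; have := ltn_ord j; lia.
Qed.

Lemma PtP n (sigma : 'S_n) : (perm_mx sigma)^T *m perm_mx sigma = 1%:M :> 'M['F_2]_n.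
Proof. by rewrite tr_perm_mx -perm_mxM mulVg perm_mx1. Qed.
Lemma PPt n (sigma : 'S_n) : perm_mx sigma *m (perm_mx sigma)^T = 1%:M :> 'M['F_2]_n.
Proof. by rewrite tr_perm_mx -perm_mxM mulgV perm_mx1. Qed.

Theorem theorem18 :
  exists alg : forall n : nat, algorithm n,
    forall (n : nat) (o : vertex n -> vertex n) (s : vertex n),
      is_matousek_uso o s -> finds_sink_within (alg n) o s n.
Proof.
exists alg => n o s [sigma [A [Hup [Hu ->]]]].
rewrite /finds_sink_within /= hist.
pose P : 'M['F_2]_n := perm_mx sigma.
pose B : 'M['F_2]_n := 1%:M + A.
have Hdiag : forall i, A i i = 1.
  move=> i; apply: F2one.
  have Ht : is_trig_mx A^T.
    by apply/is_trig_mxP => a b hab; rewrite mxE Hup.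
  move: Hu; rewrite unitmxE unitfE -det_tr (det_trig Ht).
  by move/prodf_neq0 => /(_ i isT); rewrite mxE.
have HB : forall i j : 'I_n, (j <= i)%N -> B i j = 0.
  move=> i j; rewrite leq_eqVlt => /orP [/eqP/val_inj ->|h].
    by rewrite !mxE eqxx Hdiag /= F2add.
  rewrite !mxE Hup //.
  have -> : (i == j) = false by apply/eqP => E; move: h; rewrite E ltnn.
  by rewrite add0r.
have key : forall k, P^T *m (iter k (fun v => v + matousek_outmap sigma A s v) 0 + s)
    = iter k (mulmx B) (P^T *m s).
  elim=> [|k IH] /=; first by rewrite add0r.
  rewrite -IH /matousek_outmap -/P.
  rewrite addrAC mulmxDr -!mulmxA (mulmxA P^T P) PtP mul1mx.
  by rewrite /B mulmxDl mul1mx.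
have Z : P^T *m (iter n (fun v => v + matousek_outmap sigma A s v) 0 + s) = 0.
  rewrite key; apply/matrixP => i j; rewrite ord1 mxE.
  by apply: nil_iter => //; rewrite subnn.
have Z2 : iter n (fun v => v + matousek_outmap sigma A s v) 0 + s = 0.
  by have := congr1 (mulmx P) Z; rewrite mulmxA PPt mul1mx mulmx0.
apply/matrixP => i j.
move/matrixP: Z2 => /(_ i j); rewrite !mxE => /eqP; rewrite addr_eq0 => /eqP ->.
by rewrite F2opp.
Qed.
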